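(* Suppose each net demand function $D_i$ ($i=1,\dots,N$) satisfies the Net Demand Assumption. Let $\mathcal L$ be the Lagrangian defined below. Then a vector $(\mathbf P^*,\mathcal Q^*,\mathbf E^*,\mathbf L^* )\in\mathbb R^N_{>0}\times\mathbb R^{N(N+2)}_{\ge0}$ is a saddle point of $\mathcal L$ on $\mathbb R^N_{\ge0}\times\mathbb R^{N(N+2)}_{\ge0}$ if and only if it is a competitive equilibrium.
   Context: Economy with $N$ sectors; sector $i$ has production function $F_i:\mathbb R^{N+2}_{\ge0}\to\mathbb R_{\ge0}$, labor cost $W_i:\mathbb R_{\ge0}\to\mathbb R_{>0}$; carbon price $P_E>0$ is fixed. An allocation is $(\mathcal Q,\mathbf E,\mathbf L)$ with $\mathcal Q=(q_{ij})_{i,j=1}^N$, $\mathbf q_i=(q_{ij})_j$, $\mathbf E=(E_i)$, $\mathbf L=(L_i)$, all nonnegative. Profit $\Pi_i(\mathbf P,P_E,\mathbf q_i,E_i,L_i)=P_iF_i(\mathbf q_i,E_i,L_i)-\sum_jP_jq_{ij}-P_EE_i-W_i(L_i)$. Net Demand Assumption: $D_i:\mathbb R_{\ge0}\to\mathbb R$ is strictly decreasing and continuous on $\mathbb R_{>0}$, with $\lim_{P\to0}D_i(P)=\infty$ and $\lim_{P\to\infty}D_i(P)\le0$. Consumer surplus $\Delta_i(P)=\int_1^PD_i(z)\,dz$ (i.e. $-\int_P^1D_i$ for $P\le1$, possibly $-\infty$ at $P=0$). Lagrangian: $\mathcal L(\mathbf P,\mathcal Q,\mathbf E,\mathbf L)=\sum_{i=1}^N\{P_iF_i(\mathbf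 q_i,E_i,L_i)-\sum_jP_jq_{ij}-P_EE_i-W_i(L_i)-\Delta_i(P_i)\}$. Saddle point: $(\mathbf P^*,\mathcal Q^*,\mathbf E^*,\mathbf L^* )$ with $\mathcal L(\mathbf P^*,\mathcal Q,\mathbf E,\mathbf L)\le\mathcal L(\mathbf P^*,\mathcal Q^*,\mathbf E^*,\mathbf L^* )\le\mathcal L(\mathbf P,\mathcal Q^*,\mathbf E^*,\mathbf L^* )$ for all $\mathbf P\in\mathbb R^N_{\ge0}$, $(\mathcal Q,\mathbf E,\mathbf L)\in\mathbb R^{N(N+2)}_{\ge0}$. Competitive equilibrium: $(\mathbf P^*,\mathcal Q^*,\mathbf E^*,\mathbf L^* )\in\mathbb R^N_{\ge0}\times\mathbb R^{N(N+2)}_{\ge0}$ such that for each $i$: (i) market clearing $F_i(\mathbf q_i^*,E_i^*,L_i^* )=D_i(P_i^* )+\sum_{j=1}^Nq^*_{ji}$; (ii) $(\mathbf q_i^*,E_i^*,L_i^* )$ maximizes $\Pi_i(\mathbf P^*,P_E,\cdot)$ over $\mathbb R^{N+2}_{\ge0}$. *)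

(* Defs.v *)
From HB Require Import structures.
From mathcomp Require Import all_boot all_order all_algebra.
From mathcomp Require Import all_classical all_reals all_analysis.
Set Implicit Arguments. Unset Strict Implicit. Unset Printing Implicit Defensive.
Import Order.TTheory GRing.Theory Num.Theory.
Import numFieldNormedType.Exports.
Local Open Scope classical_set_scope.
Local Open Scope ring_scope.

(* Net Demand Assumption for D : R -> R (only values on [0,oo) matter). *)
Definition net_demand_assumption (R : realType) (D : R -> R) : Prop :=
  (forall x y : R, 0 < x -> x < y -> D y < D x) /\
  {in `]0, +oo[, continuous D} /\
  (D x @[x --> 0^'+] --> +oo) /\
  (exists l : \bar R, ((D x)%:E @[x --> +oo] --> l) /\ (l <= 0)%E).

Definition surplus (R : realType) (D : R -> R) (P : R) : \bar R :=
  if 1 <= P then (\int[@lebesgue_measure R]_(x in `[1%R, P]%classic) (D x)%:E)%E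
  else (- \int[@lebesgue_measure R]_(x in `[P, 1%R]%classic) (D x)%:E)%E.

Definition profit (R : realType) (N : nat)
  (F : 'I_N -> ('I_N -> R) -> R -> R -> R) (W : 'I_N -> R -> R)
  (i : 'I_N) (P : 'I_N -> R) (PE : R) (qi : 'I_N -> R) (Ei Li : R) : R :=
  P i * F i qi Ei Li - \sum_(j < N) P j * qi j - PE * Ei - W i Li.

Definition lagrangian (R : realType) (N : nat)
  (F : 'I_N -> ('I_N -> R) -> R -> R -> R) (W : 'I_N -> R -> R)
  (D : 'I_N -> R -> R) (PE : R)
  (P : 'I_N -> R) (Q : 'I_N -> 'I_N -> R) (E L : 'I_N -> R) : \bar R :=
  (\sum_(i < N) ((profit F W i P PE (Q i) (E i) (L i))%:E
                   - surplus (D i) (P i)))%E.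

Definition nonneg_alloc (R : realType) (N : nat)
  (Q : 'I_N -> 'I_N -> R) (E L : 'I_N -> R) : Prop :=
  (forall i j, 0 <= Q i j) /\ (forall i, 0 <= E i) /\ (forall i, 0 <= L i).

Definition saddle_point (R : realType) (N : nat)
  (F : 'I_N -> ('I_N -> R) -> R -> R -> R) (W : 'I_N -> R -> R)
  (D : 'I_N -> R -> R) (PE : R)
  (Ps : 'I_N -> R) (Qs : 'I_N -> 'I_N -> R) (Es Ls : 'I_N -> R) : Prop :=
  (forall Q E L, nonneg_alloc Q E L ->
     (lagrangian F W D PE Ps Q E L <= lagrangian F W D PE Ps Qs Es Ls)%E) /\
  (forall P : 'I_N -> R, (forall i, 0 <= P i) ->
     (lagrangian F W D PE Ps Qs Es Ls <= lagrangian F W D PE P Qs Es Ls)%E).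

Definition competitive_equilibrium (R : realType) (N : nat)
  (F : 'I_N -> ('I_N -> R) -> R -> R -> R) (W : 'I_N -> R -> R)
  (D : 'I_N -> R -> R) (PE : R)
  (Ps : 'I_N -> R) (Qs : 'I_N -> 'I_N -> R) (Es Ls : 'I_N -> R) : Prop :=
  (forall i, 0 <= Ps i) /\ nonneg_alloc Qs Es Ls /\
  forall i : 'I_N,
    F i (Qs i) (Es i) (Ls i) = D i (Ps i) + \sum_(j < N) Qs j i /\
    (forall (qi : 'I_N -> R) (Ei Li : R),
       (forall j, 0 <= qi j) -> 0 <= Ei -> 0 <= Li ->
       profit F W i Ps PE qi Ei Li <= profit F W i Ps PE (Qs i) (Es i) (Ls i)).

(* Main.v *)
Require Import Defs.
From HB Require Import structures.
From mathcomp Require Import all_boot all_order all_algebra.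
From mathcomp Require Import all_classical all_reals all_analysis.
From mathcomp Require Import measurable_realfun.
From mathcomp Require Import lra.
Import Order.TTheory GRing.Theory Num.Theory.
Import numFieldNormedType.Exports.
Local Open Scope classical_set_scope.
Local Open Scope ring_scope.

Section H.
Local Open Scope ereal_scope.
Lemma int_lb (R : realType) (A : set R) (f : R -> R) (c : R) :
  measurable A -> (@lebesgue_measure R A < +oo)%E -> measurable_fun A f ->
  (forall x, A x -> c <= f x)%R ->
  c%:E * @lebesgue_measure R A <= \int[@lebesgue_measure R]_(x in A) (f x)%:E.
Proof.
move=> mA Afin mf hf.
have mfE : measurable_fun A (EFin \o f) by apply/measurable_EFinP.
have [c0|c0] := leP 0%R c.
  have := @integral_cst _ _ _ (@lebesgue_measure R) A mA c%:E.
  move=> <-.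
  apply: ge0_le_integral.
  - exact: mA.
  - by move=> x _ /=; rewrite lee_fin.
  - exact: measurable_cst.
  - exact: mfE.
  - by move=> x Ax /=; rewrite lee_fin hf.
rewrite integralE.
have h1 : \int[@lebesgue_measure R]_(x in A) (EFin \o f)^\- x <= (- c)%:E * @lebesgue_measure R A.
  have := @integral_cst _ _ _ (@lebesgue_measure R) A mA (- c)%:E.
  move=> <-.
  apply: ge0_le_integral.
  - exact: mA.
  - by move=> x _ /=; exact: funeneg_ge0.
  - exact: measurable_funeneg.
  - exact: measurable_cst.
  - move=> x Ax /=; rewrite funenegE /= ge_max lee_fin lerN2 hf //=.
    by rewrite lee_fin lerNr oppr0 ltW.
have h0 : 0 <= \int[@lebesgue_measure R]_(x in A) (EFin \o f)^\+ x.
  by apply: integral_ge0 => x _; exact: funepos_ge0.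
have -> : c%:E * @lebesgue_measure R A = 0 - ((- c)%:E * @lebesgue_measure R A).
  by rewrite EFinN mulNe sub0e oppeK.
exact: leeB h0 h1.
Qed.

Lemma int_lb2 (R : realType) (A : set R) (f : R -> R) (c v : R) :
  measurable A -> @lebesgue_measure R A = v%:E -> measurable_fun A f ->
  (forall x, A x -> c <= f x)%R ->
  c%:E * v%:E <= \int[@lebesgue_measure R]_(x in A) (f x)%:E.
Proof.
move=> mA e mf hf; rewrite -e; apply: int_lb => //; by rewrite e ltry.
Qed.
End H.

Section DS.
Variables (R : realType) (D : R -> R).
Hypothesis hnd : net_demand_assumption D.
Let hdec : forall x y : R, (0 < x)%R -> (x < y)%R -> (D y < D x)%R.
Proof. by case: hnd. Qed.
Let hc : forall x : R, (0 < x)%R -> {for x, continuous D}.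
Proof. by case: hnd => _ [h _] x x0; apply: h; rewrite in_itv /= andbT. Qed.
Local Notation mu := (@lebesgue_measure R).
Local Open Scope ring_scope.

Lemma dle x y : 0 < x -> x <= y -> D y <= D x.
Proof. move=> x0; rewrite le_eqVlt => /predU1P[->//|xy]; exact/ltW/hdec. Qed.

Lemma mD (A : set R) : measurable A -> A `<=` `]0, +oo[%classic -> measurable_fun A D.
Proof.
move=> mA sA; apply: (measurable_funS _ sA) => //.
apply: open_continuous_measurable_fun; first exact: interval_open.
by move=> x; rewrite inE /= in_itv /= andbT => hx; apply: hc.
Qed.

Lemma intD a b : 0 < a -> mu.-integrable `[a, b] (EFin \o D).
Proof.
move=> a0; apply: measurable_bounded_integrable => //.
- rewrite /= lebesgue_measure_itv; case: ifP => _ //=; rewrite -EFinD ltry //.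
- apply: mD => // x /=; rewrite !in_itv /= andbT => /andP[ax _]; exact: lt_le_trans ax.
- exists (`|D a| + `|D b|); split; first by rewrite num_real.
  move=> M hM x /= /[!in_itv] /= /andP[ax xb].
  have h1 := dle _ _ a0 ax. have h2 : D b <= D x by apply: dle _ _ (lt_le_trans a0 ax) xb.
  apply: le_trans (ltW hM).
  have n1 := ler_norm (D a). have n2 := ler_norm (- D b). rewrite normrN in n2.
  have n3 := normr_ge0 (D a). have n4 := normr_ge0 (D b).
  rewrite ler_norml; apply/andP; split; lra.
Qed.

Lemma mu_itv (a b : R) : a <= b -> mu `[a, b]%classic = (b - a)%:E.
Proof.
move=> ab; rewrite /= lebesgue_measure_itv /= lte_fin.
case: ifP => [_|/negbT]; first by rewrite EFinB.
rewrite -leNgt => ba.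
have -> : a = b by apply/eqP; rewrite eq_le ab ba.
by rewrite subrr.
Qed.

Lemma cst_int (a b k : R) : a <= b -> mu.-integrable `[a, b] (EFin \o cst k).
Proof.
move=> ab; apply: measurable_bounded_integrable => //.
- by move: (ltry (b - a)); rewrite -(mu_itv _ _ ab).

- exists `|k|; split; first by rewrite num_real.
  by move=> M hM x _ /=; exact: ltW.
Qed.

Definition I (a b : R) := \int[mu]_(x in `[a, b]) D x.

Lemma Ibnd a b : 0 < a -> a <= b -> (b - a) * D b <= I a b <= (b - a) * D a.
Proof.
move=> a0 ab.
have e c : \int[mu]_(x in `[a, b]) cst c x = (b - a) * c.
  rewrite Rintegral_cst // mulrC; congr (_ * _).
  by have := mu_itv _ _ ab => /(congr1 fine) h; exact: h.
apply/andP; split.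
- rewrite -e; apply: le_Rintegral => //; [exact: cst_int | exact: intD |].
  move=> x /= /[!in_itv] /= /andP[ax xb]; exact: dle (lt_le_trans a0 ax) xb.
- rewrite -e; apply: le_Rintegral => //; [exact: intD | exact: cst_int |].
  move=> x /= /[!in_itv] /= /andP[ax xb]; exact: dle a0 ax.
Qed.

Lemma Iadd a c b : 0 < a -> a <= c -> c <= b -> I a b = I a c + I c b.
Proof.
move=> a0 ac cb; rewrite /I.
rewrite (@itv_bndbnd_setU _ _ _ (BLeft c)) ?bnd_simp //.
rewrite Rintegral_setU //.
- rewrite Rintegral_itv_bndo_bndc //.
  apply: integrableS (intD a b a0) => //; apply: subset_itvl; rewrite bnd_simp //.
- rewrite -(@itv_bndbnd_setU _ _ _ (BLeft c)) ?bnd_simp //; exact: intD.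
- rewrite disj_set2E; apply/eqP/seteqP; split => // x /= [].
  by rewrite !in_itv /= => /andP[_ xc] /andP[cx _]; move: (lt_le_trans xc cx); rewrite ltxx.
Qed.

Lemma IE a b : 0 < a -> (I a b)%:E = (\int[mu]_(x in `[a, b]) (D x)%:E)%E.
Proof. by move=> a0; rewrite /I /Rintegral fineK // integrable_fin_num // intD. Qed.

Lemma I0 a : 0 < a -> I a a = 0.
Proof. by move=> a0; have := Ibnd a a a0 (lexx a); rewrite subrr !mul0r -eq_le => /eqP. Qed.

Definition S (p : R) := if 1 <= p then I 1 p else - I p 1.

Lemma surpE p : 0 < p -> surplus D p = (S p)%:E.
Proof.
move=> p0; rewrite /surplus /S; case: ifP => _; first by rewrite IE.
by rewrite EFinN IE.
Qed.

Lemma SB a b : 0 < a -> a <= b -> S b - S a = I a b.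
Proof.
move=> a0 ab; rewrite /S; case: ifP => hb; case: ifP => ha.
- rewrite (Iadd 1 a b) //; lra.
- move/negbT: ha; rewrite -ltNge => ha.
  rewrite (Iadd a 1 b) //; [lra | exact: ltW].
- by move: hb; rewrite (le_trans ha ab).
- move/negbT: hb; rewrite -ltNge => hb.
  rewrite (Iadd a b 1) //; [lra | exact: ltW].
Qed.

Lemma mu_oo (m : R) : 0 <= m -> mu `]0, m[%classic = m%:E.
Proof.
move=> m0; rewrite /= lebesgue_measure_itv /= lte_fin.
case: ifP => [_|/negbT]; first by rewrite oppr0 adde0.
rewrite -leNgt => ba.
have -> : m = 0 by apply/eqP; rewrite eq_le ba m0.
by [].
Qed.

Lemma lbzero ps : 0 < ps -> ((ps * D ps - S ps)%:E <= - surplus D 0)%E.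
Proof.
move=> ps0; rewrite /surplus ler10 oppeK.
set m := Num.min ps 1.
have m0 : 0 < m by rewrite lt_min ps0 ltr01.
have m1 : m <= 1 by rewrite ge_min lexx orbT.
have mps : m <= ps by rewrite ge_min lexx.
have mf : measurable_fun (`]0, 1]%classic : set R) (EFin \o D).
  apply/measurable_EFinP; apply: mD => // x /=; rewrite !in_itv /= andbT.
  by case/andP.
rewrite -integral_itv_obnd_cbnd //.
rewrite (@itv_bndbnd_setU _ _ _ (BLeft m)) ?bnd_simp //.
rewrite integral_setU //; first last.
- rewrite disj_set2E; apply/eqP/seteqP; split => // x /= [].
  by rewrite !in_itv /= => /andP[_ xc] /andP[cx _]; move: (lt_le_trans xc cx); rewrite ltxx.
- by rewrite -(@itv_bndbnd_setU _ _ _ (BLeft m)) ?bnd_simp.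
have h1 : ((D m)%:E * m%:E <= \int[mu]_(x in `]0%R, m[%classic) (D x)%:E)%E.
  apply: int_lb2 => //.
  - exact: mu_oo (ltW m0).
  - by apply: mD => // x /=; rewrite !in_itv /= andbT; case/andP.
  - by move=> x /=; rewrite in_itv /= => /andP[x0 xm]; apply: dle => //; exact: ltW.
rewrite -IE //.
apply: le_trans (leeD h1 (lexx _)).
rewrite -EFinM -EFinD lee_fin.
rewrite /S; case: ifP => p1.
- have e : m = 1 by apply/eqP; rewrite eq_le m1 le_min p1 lexx.
  have hb := Ibnd 1 ps ltr01 p1. have hd := dle 1 ps ltr01 p1.
  rewrite e I0 ?ltr01 //; nra.
- have e : m = ps by apply/eqP; rewrite eq_le mps le_min lexx ltW // ltNge p1.
  rewrite e; lra.
Qed.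

Lemma Kmin ps p : 0 < ps -> 0 <= p ->
  ((ps * D ps)%:E - surplus D ps <= (p * D ps)%:E - surplus D p)%E.
Proof.
move=> ps0; rewrite le_eqVlt => /predU1P[<-|p0].
  rewrite mul0r add0e surpE // -EFinB; exact: lbzero.
rewrite !surpE // -!EFinB lee_fin.
have [pp|pp] := leP ps p.
  have := SB ps p ps0 pp; have := Ibnd ps p ps0 pp => /andP[_ hb] hs; nra.
have := SB p ps p0 (ltW pp); have := Ibnd p ps p0 (ltW pp) => /andP[hb _] hs; nra.
Qed.

Lemma Kconv ps y : 0 < ps -> (forall p, 0 < p -> ps * y - S ps <= p * y - S p) -> y = D ps.
Proof.
move=> ps0 h.
have up p : ps < p -> D p <= y.
  move=> pp; have := h p (lt_trans ps0 pp); have := SB ps p ps0 (ltW pp).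
  have := Ibnd ps p ps0 (ltW pp) => /andP[hb _] hs hh.
  have : (p - ps) * D p <= (p - ps) * y by nra.
  by rewrite ler_pM2l // subr_gt0.
have dn p : 0 < p -> p < ps -> y <= D p.
  move=> p0 pp; have := h p p0; have := SB p ps p0 (ltW pp).
  have := Ibnd p ps p0 (ltW pp) => /andP[_ hb] hs hh.
  have : (ps - p) * y <= (ps - p) * D p by nra.
  by rewrite ler_pM2l // subr_gt0.
have hct := hc ps ps0.
apply/eqP; rewrite eq_le; apply/andP; split.
- apply/ler_addgt0Pr => e e0.
  move/cvgrPdist_lt: hct => /(_ e e0) /nbhs_ballP [d /= d0 hd].
  set p := ps - Num.min (d / 2) (ps / 2).
  have m0 : 0 < Num.min (d / 2) (ps / 2) by rewrite lt_min !divr_gt0.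
  have m1 : Num.min (d / 2) (ps / 2) <= d / 2 by rewrite ge_min lexx.
  have m2 : Num.min (d / 2) (ps / 2) <= ps / 2 by rewrite ge_min lexx orbT.
  have hp : `|D ps - D p| < e.
    apply: hd; rewrite /ball /= /p opprB addrC subrK ger0_norm; last exact: ltW.
    lra.
  have := dn p ltac:(rewrite /p; lra) ltac:(rewrite /p; lra).
  move: hp; rewrite ltr_norml => /andP[h1 h2] h3; lra.
- apply/ler_addgt0Pr => e e0.
  move/cvgrPdist_lt: hct => /(_ e e0) /nbhs_ballP [d /= d0 hd].
  have hp : `|D ps - D (ps + d / 2)| < e.
    apply: hd; rewrite /ball /= opprD addrA subrr sub0r normrN ger0_norm.
      lra.
    by rewrite divr_ge0 // ltW.
  have := up (ps + d / 2) ltac:(lra).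
  move: hp; rewrite ltr_norml => /andP[h1 h2] h3; lra.
Qed.

End DS.

Section Main.
Local Open Scope ring_scope.

Lemma profit_rearr (R : realType) (N : nat)
  (F : 'I_N -> ('I_N -> R) -> R -> R -> R) (W : 'I_N -> R -> R) (PE : R)
  (P : 'I_N -> R) (Q : 'I_N -> 'I_N -> R) (E L : 'I_N -> R) :
  \sum_(i < N) profit F W i P PE (Q i) (E i) (L i) =
  \sum_(i < N) (P i * (F i (Q i) (E i) (L i) - \sum_(j < N) Q j i) - (PE * E i + W i (L i))).
Proof.
transitivity (\sum_(i < N) (P i * F i (Q i) (E i) (L i) - (PE * E i + W i (L i))
   - \sum_(j < N) P j * Q i j)).
  by apply: eq_bigr => i _; rewrite /profit; lra.
transitivity (\sum_(i < N) (P i * F i (Q i) (E i) (L i) - (PE * E i + W i (L i))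
   - P i * \sum_(j < N) Q j i)); last first.
  by apply: eq_bigr => i _; rewrite mulrBr; lra.
rewrite !sumrB; congr (_ - _).
rewrite exchange_big; apply: eq_bigr => i _; by rewrite mulr_sumr.
Qed.

Lemma lagE (R : realType) (N : nat)
  (F : 'I_N -> ('I_N -> R) -> R -> R -> R) (W : 'I_N -> R -> R)
  (D : 'I_N -> R -> R) (PE : R)
  (P : 'I_N -> R) (Q : 'I_N -> 'I_N -> R) (E L : 'I_N -> R) :
  lagrangian F W D PE P Q E L =
  (\sum_(i < N) ((P i * (F i (Q i) (E i) (L i) - \sum_(j < N) Q j i)
      - (PE * E i + W i (L i)))%:E - surplus (D i) (P i)))%E.
Proof.
rewrite /lagrangian big_split /= [RHS]big_split /=; congr (_ + _)%E.
by rewrite !sumEFin profit_rearr.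
Qed.

Lemma lag_fin (R : realType) (N : nat)
  (F : 'I_N -> ('I_N -> R) -> R -> R -> R) (W : 'I_N -> R -> R)
  (D : 'I_N -> R -> R) (PE : R) (hD : forall i, net_demand_assumption (D i))
  (P : 'I_N -> R) (Q : 'I_N -> 'I_N -> R) (E L : 'I_N -> R) :
  (forall i, 0 < P i) ->
  lagrangian F W D PE P Q E L =
  (\sum_(i < N) (profit F W i P PE (Q i) (E i) (L i) - S _ (D i) (P i)))%:E.
Proof.
move=> hP; rewrite /lagrangian -sumEFin; apply: eq_bigr => i _.
by rewrite (surpE _ _ (hD i)) // EFinB.
Qed.

Lemma lag_fin2 (R : realType) (N : nat)
  (F : 'I_N -> ('I_N -> R) -> R -> R -> R) (W : 'I_N -> R -> R)
  (D : 'I_N -> R -> R) (PE : R) (hD : forall i, net_demand_assumption (D i))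
  (P : 'I_N -> R) (Q : 'I_N -> 'I_N -> R) (E L : 'I_N -> R) :
  (forall i, 0 < P i) ->
  lagrangian F W D PE P Q E L =
  (\sum_(i < N) (P i * (F i (Q i) (E i) (L i) - \sum_(j < N) Q j i)
      - (PE * E i + W i (L i)) - S _ (D i) (P i)))%:E.
Proof.
move=> hP; rewrite lagE -sumEFin; apply: eq_bigr => i _.
by rewrite (surpE _ _ (hD i)) // EFinB.
Qed.

End Main.

Theorem lemma3p1 (R : realType) (N : nat)
  (F : 'I_N -> ('I_N -> R) -> R -> R -> R) (W : 'I_N -> R -> R)
  (D : 'I_N -> R -> R) (PE : R)
  (hF : forall i (qi : 'I_N -> R) (Ei Li : R),
          (forall j, 0 <= qi j) -> 0 <= Ei -> 0 <= Li -> 0 <= F i qi Ei Li)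
  (hW : forall i (Li : R), 0 <= Li -> 0 < W i Li)
  (hPE : 0 < PE)
  (hD : forall i, net_demand_assumption (D i))
  (Ps : 'I_N -> R) (Qs : 'I_N -> 'I_N -> R) (Es Ls : 'I_N -> R)
  (hPs : forall i, 0 < Ps i)
  (hA : nonneg_alloc Qs Es Ls) :
  saddle_point F W D PE Ps Qs Es Ls <-> competitive_equilibrium F W D PE Ps Qs Es Ls.
Proof.
pose y i := F i (Qs i) (Es i) (Ls i) - \sum_(j < N) Qs j i.
split.
- move=> [hS1 hS2]; split; first by move=> i; exact: ltW.
  split => // i; split.
  + suff : y i = D i (Ps i) by rewrite /y => <-; rewrite subrK.
    apply: (Kconv _ _ (hD i)) => // p p0.
    pose P' k := if k == i then p else Ps k.
    have hP' k : 0 < P' k by rewrite /P'; case: ifP.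
    have := hS2 P' (fun k => ltW (hP' k)).
    rewrite (lag_fin2 _ _ _ _ _ _ hD) // (lag_fin2 _ _ _ _ _ _ hD) // lee_fin.
    rewrite (bigD1 i) // [X in _ <= X](bigD1 i) //.
    have -> : \sum_(k < N | k != i) (P' k * (F k (Qs k) (Es k) (Ls k) - \sum_(j < N) Qs j k) -
        (PE * Es k + W k (Ls k)) - S _ (D k) (P' k)) =
      \sum_(k < N | k != i) (Ps k * (F k (Qs k) (Es k) (Ls k) - \sum_(j < N) Qs j k) -
        (PE * Es k + W k (Ls k)) - S _ (D k) (Ps k)).
      by apply: eq_bigr => k /negbTE ki; rewrite /P' ki.
    rewrite lerD2r /P' eqxx -/(y i) => h.
    lra.
  + move=> qi Ei Li hq hE hL.
    pose Q' k := if k == i then qi else Qs k.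
    pose E' k := if k == i then Ei else Es k.
    pose L' k := if k == i then Li else Ls k.
    have hn : nonneg_alloc Q' E' L'.
      case: hA => [h1 [h2 h3]]; split; [|split] => k; rewrite /Q' /E' /L'; case: ifP => //.
    have := hS1 Q' E' L' hn.
    rewrite (lag_fin _ _ _ _ _ _ hD) // (lag_fin _ _ _ _ _ _ hD) // lee_fin.
    rewrite (bigD1 i) // [X in _ <= X](bigD1 i) //.
    have -> : \sum_(k < N | k != i) (profit F W k Ps PE (Q' k) (E' k) (L' k) - S _ (D k) (Ps k)) =
      \sum_(k < N | k != i) (profit F W k Ps PE (Qs k) (Es k) (Ls k) - S _ (D k) (Ps k)).
      by apply: eq_bigr => k /negbTE ki; rewrite /Q' /E' /L' ki.
    by rewrite lerD2r /Q' /E' /L' eqxx lerD2r.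
- move=> [_ [_ hce]]; split.
  + move=> Q E L [h1 [h2 h3]].
    rewrite (lag_fin _ _ _ _ _ _ hD) // (lag_fin _ _ _ _ _ _ hD) // lee_fin.
    apply: ler_sum => k _; rewrite lerD2r.
    by case: (hce k) => _; apply.
  + move=> P hP; rewrite !lagE; apply: lee_sum => k _.
    have hy : F k (Qs k) (Es k) (Ls k) - \sum_(j < N) Qs j k = D k (Ps k).
      by case: (hce k) => -> _; rewrite addrK.
    rewrite hy !EFinB addeAC [X in (_ <= X)%E]addeAC.
    apply: leeD => //.
    exact: (Kmin _ _ (hD k)).
Qed.
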